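(* Let $(t_j^i)_{0\le j\le i}$ be real numbers and let $h_{j,k}^i$ ($0\le k\le i$, $0\le j\le i-k$) be defined by $h_{j,0}^i=t_j^i$ and $h_{j,k}^i=h_{j,k-1}^{i-1}+h_{j,k-1}^{i}+h_{j+1,k-1}^{i}$ for $k\ge 1$. Then for any $0\leq k \leq i$, $0\leq j \leq i-k$, $$h^i_{j,k}=\sum_{r=i-k}^{i} \sum_{s=j}^{j+k-i+r} \binom{k}{s-j,\,i-r,\,k+j+r-s-i} t_{s}^{r}.$$
   Context: For non-negative integers $p,q,r$ with $p+q+r=n$, $\binom{n}{p,q,r}=\frac{n!}{p!\,q!\,r!}$ denotes the tetrahedron trinomial coefficient. *)

(* Defs.v *)
From HB Require Import structures.
From mathcomp Require Import all_boot all_order all_algebra.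
Set Implicit Arguments. Unset Strict Implicit. Unset Printing Implicit Defensive.
Import Order.TTheory GRing.Theory Num.Theory.
Local Open Scope ring_scope.

Definition trinom (R : realFieldType) (n p q r : nat) : R :=
  (n`!)%:R / ((p`!)%:R * (q`!)%:R * (r`!)%:R).

(* h t k i j = h^i_{j,k}, where t i j = t^i_j.
   h^i_{j,0} = t^i_j,
   h^i_{j,k} = h^{i-1}_{j,k-1} + h^i_{j,k-1} + h^i_{j+1,k-1}  (k >= 1).
   Values outside the range 0 <= k <= i, 0 <= j <= i - k are irrelevant. *)
Fixpoint h (R : realFieldType) (t : nat -> nat -> R) (k i j : nat) : R :=
  match k with
  | 0 => t i j
  | k'.+1 => h t k' i.-1 j + h t k' i j + h t k' i j.+1
  end.

(* Main.v *)
Require Import Defs.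
From HB Require Import structures.
From mathcomp Require Import all_boot all_order all_algebra.
From mathcomp Require Import ring lra zify.
Import Order.TTheory GRing.Theory Num.Theory.
Local Open Scope ring_scope.

Section S.
Variable R : realFieldType.
Variable t : nat -> nat -> R.

Lemma pascal_sum (x : nat -> R) m :
  \sum_(b < m.+2) ('C(m.+1, b))%:R * x b =
  \sum_(b < m.+1) ('C(m, b))%:R * x b + \sum_(b < m.+1) ('C(m, b))%:R * x b.+1.
Proof.
rewrite big_ord_recl /=.
under eq_bigr => b _ do rewrite /bump /= binS natrD mulrDl.
rewrite big_split /= addrA; congr (_ + _).
have -> : \sum_(b < m.+1) ('C(m, b))%:R * x b =
          \sum_(b < m.+2) ('C(m, b))%:R * x b.
  by rewrite [in RHS]big_ord_recr /= (bin_small (ltnSn m)) mul0r addr0.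
rewrite [in RHS]big_ord_recl !bin0; congr (_ + _); apply: eq_bigr => i _; by rewrite /bump /= ?add1n.
Qed.

Definition G m i j := \sum_(a < m.+1) ('C(m, a))%:R * t i (j + a)%N.
Definition F k i j := \sum_(b < k.+1) ('C(k, b))%:R * G (k - b)%N (i - b)%N j.

Lemma G_rec m i j : G m.+1 i j = G m i j + G m i j.+1.
Proof.
rewrite /G (pascal_sum (fun a => t i (j + a))); congr (_ + _).
by apply: eq_bigr => a _; rewrite addnS addSn.
Qed.

Lemma F_rec k i j : F k.+1 i j = F k i.-1 j + F k i j + F k i j.+1.
Proof.
rewrite /F (pascal_sum (fun b => G (k.+1 - b) (i - b) j)).
rewrite -addrA [LHS]addrC; congr (_ + _).
  by apply: eq_bigr => b _; rewrite subSS; have -> : (i - b.+1 = i.-1 - b)%N by lia.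
rewrite -big_split /=; apply: eq_bigr => b _.
by rewrite subSn ?G_rec ?mulrDr // -ltnS.
Qed.

Lemma hF k i j : h t k i j = F k i j.
Proof.
elim: k i j => [|k IH] i j /=.
  by rewrite /F big_ord1 /G big_ord1 !bin0 !mul1r addn0 subn0.
by rewrite !IH F_rec.
Qed.

Lemma outer_reindex (f : nat -> R) k i : (k <= i)%N ->
  \sum_(i - k <= r < i.+1) f r = \sum_(b < k.+1) f (i - b)%N.
Proof.
elim: k => [|k IH] hk.
  by rewrite subn0 big_nat1 big_ord1 /= subn0.
rewrite big_ltn; last by lia.
have -> : (i - k.+1).+1 = (i - k)%N by lia.
by rewrite IH ?(ltnW hk) // [RHS]big_ord_recr /= addrC.
Qed.

Lemma trinomE k a b : (b <= k)%N -> (a <= k - b)%N ->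
  trinom R k a b (k - b - a)%N = ('C(k, b))%:R * ('C(k - b, a))%:R.
Proof.
move=> hb ha.
rewrite /trinom -(bin_fact hb) -(bin_fact ha) !natrM.
have f0 : forall n, (n`!)%:R != 0 :> R by move=> n; rewrite pnatr_eq0 -lt0n fact_gt0.
have c0 : ('C(k, b))%:R != 0 :> R by rewrite pnatr_eq0 -lt0n bin_gt0.
have c1 : ('C(k - b, a))%:R != 0 :> R by rewrite pnatr_eq0 -lt0n bin_gt0.
field.
by rewrite !f0.
Qed.

Lemma shift_sum (g : nat -> R) j n :
  \sum_(j <= s < (j + n)%N) g s = \sum_(a < n) g (j + a)%N.
Proof.
rewrite -{1}(add0n j) big_addn addKn big_mkord.
by apply: eq_bigr => a _; rewrite addnC.
Qed.

End S.

Theorem corollary3 (R : realFieldType) (t : nat -> nat -> R) (i j k : nat) :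
  (k <= i)%N -> (j <= i - k)%N ->
  h t k i j =
  \sum_(i - k <= r < i.+1)
     \sum_(j <= s < (j + k + r - i).+1)
        trinom R k (s - j) (i - r) (k + j + r - s - i) * t r s.
Proof.
move=> hk _.
rewrite hF /F outer_reindex //.
apply: eq_bigr => [[b hb]] _ /=.
have hbk : (b <= k)%N by [].
have -> : (j + k + (i - b) - i).+1 = (j + (k - b).+1)%N by lia.
rewrite shift_sum /G big_distrr /=.
apply: eq_bigr => [[a ha]] _ /=.
have ha' : (a <= k - b)%N by [].
have -> : (j + a - j = a)%N by lia.
have -> : (i - (i - b) = b)%N by lia.
have -> : (k + j + (i - b) - (j + a) - i = k - b - a)%N by lia.
by rewrite trinomE // mulrA.
Qed.
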